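(* Let $G$ be a graph with minimum degree $\delta$ and order $n$, where $n\ge 2\delta+2$. Then $\gamma_{\rm i}(G)=n-\delta$ if and only if $G$ contains a spanning subgraph isomorphic to $K_{\delta,n-\delta}$ such that the part of the bipartition of size $n-\delta$ is an independent set in $G$.
   Context: All graphs are finite and simple. Indicated domination game on $G$: two players, Dominator and Staller, alternate. In each round Dominator indicates a vertex $v$ not yet dominated by the vertices previously selected by Staller (a vertex dominates itself and its neighbors), and Staller must select a vertex of the closed neighborhood $N[v]$, adding it to a set $D$. The game ends when $D$ is a dominating set of $G$. Dominator wants to minimize $|D|$ and Staller to maximize it; the size of $D$ under optimal play of both is the indicated domination number $\gamma_{\rm i}(G)$. *)

(* Defs.v *)
From mathcomp Require Import all_boot.
Set Implicit Arguments. Unset Strict Implicit. Unset Printing Implicit Defensive.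

Definition simple_graph (T : finType) (e : rel T) : Prop :=
  symmetric e /\ irreflexive e.

Section IndicatedDomination.
Variables (T : finType) (e : rel T).

Definition cnbhd (v : T) : {set T} := [set u | (u == v) || e v u].

Definition deg (v : T) : nat := #|[set u | e v u]|.

Definition dominated (D : {set T}) : {set T} :=
  [set x | [exists u in D, x \in cnbhd u]].

Definition dominating (D : {set T}) : bool := dominated D == [set: T].

(* Value of the indicated domination game from position D (the set of
   vertices selected so far by Staller): number of vertices still to be
   selected under optimal play. Dominator (minimizer) indicates an
   undominated vertex v; Staller (maximizer) selects u in N[v].
   Each move dominates at least one new vertex, so fuel #|T| suffices;
   the min is over a nonempty set whenever D is not dominating, and all
   values are <= #|T|, so the default #|T| of the min is harmless. *)
Fixpoint igame (fuel : nat) (D : {set T}) : nat :=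
  match fuel with
  | 0 => 0
  | f.+1 =>
    if dominating D then 0 else
    \big[minn/#|T|]_(v | v \notin dominated D)
       \max_(u in cnbhd v) (igame f (u |: D)).+1
  end.

Definition gamma_i : nat := igame #|T| set0.

Definition is_min_degree (delta : nat) : Prop :=
  (forall v, delta <= deg v) /\ (exists v, deg v = delta).

(* G has a spanning subgraph isomorphic to K_{delta, n - delta} whose part
   of size n - delta is independent in G: a bipartition (A, ~: A) of V with
   #|A| = delta, #|~: A| = n - delta, all A--(~:A) edges present in G,
   and ~: A independent in G. *)
Definition has_spanning_Kdn_indep (delta : nat) : Prop :=
  exists A : {set T},
    [/\ #|A| = delta, #|~: A| = #|T| - delta,
        (forall a b, a \in A -> b \in ~: A -> e a b)
      & (forall b b', b \in ~: A -> b' \in ~: A -> ~~ e b b')].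

End IndicatedDomination.

(* Main.v *)
Require Import Defs.
From mathcomp Require Import all_boot.
From mathcomp Require Import zify.

Set Implicit Arguments. Unset Strict Implicit. Unset Printing Implicit Defensive.

Lemma bigmin_le (I : finType) (P : pred I) (F : I -> nat) x i :
  P i -> \big[minn/x]_(j | P j) F j <= F i.
Proof.
move=> Pi; rewrite -big_filter.
have : i \in [seq j <- index_enum I | P j] by rewrite mem_filter Pi mem_index_enum.
elim: [seq j <- index_enum I | P j] => [//|a s IH]; rewrite inE big_cons.
case/orP=> [/eqP->|/IH H]; first exact: geq_minl.
exact: leq_trans (geq_minr _ _) H.
Qed.

Lemma bigmin_ge (I : finType) (P : pred I) (F : I -> nat) x k :
  k <= x -> (forall j, P j -> k <= F j) -> k <= \big[minn/x]_(j | P j) F j.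
Proof.
move=> kx H; elim/big_ind: _ => //; by move=> a b ka kb; rewrite leq_min ka kb.
Qed.

Section G.
Variables (T : finType) (e : rel T).
Hypothesis esym : symmetric e.
Hypothesis eirr : irreflexive e.

Lemma cnbhd_sym x y : (x \in cnbhd e y) = (y \in cnbhd e x).
Proof. by rewrite !inE eq_sym esym. Qed.

Lemma cnbhd_self x : x \in cnbhd e x.
Proof. by rewrite inE eqxx. Qed.

Lemma domU x D : dominated e (x |: D) = cnbhd e x :|: dominated e D.
Proof.
apply/setP=> y; rewrite /dominated !inE; apply/existsP/orP.
- case=> z /andP[]; rewrite !inE => /orP[/eqP->|zD] yz; [by left|right].
  by apply/existsP; exists z; rewrite zD inE.
- case=> [H|/existsP[z /andP[zD yz]]]; first by exists x; rewrite !inE eqxx /= ?inE.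
  by exists z; rewrite in_setU1 zD orbT yz.
Qed.

Lemma dom0 : dominated e set0 = set0.
Proof. by apply/setP=> y; rewrite /dominated !inE; apply/existsP => [[z]]; rewrite inE. Qed.

Lemma card_cnbhd u : #|cnbhd e u| = (deg e u).+1.
Proof.
have -> : cnbhd e u = u |: [set x | e u x] by apply/setP=> y; rewrite !inE.
by rewrite cardsU1 inE eirr.
Qed.

Lemma U1 f D : igame e f D <= #|~: dominated e D|.
Proof.
elim: f D => [//|f IH] D /=; case: ifP => // Hdom.
move/negbT: Hdom; rewrite /dominating eqEsubset subsetT /= => /subsetPn [v _ Hv].
apply: leq_trans (bigmin_le (P := fun v0 => v0 \notin dominated e D) _ _ Hv) _.
apply/bigmax_leqP => w Hw; apply: leq_ltn_trans (IH _) _.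
rewrite domU setCU; apply: proper_card; rewrite properE subsetIr /=.
apply/subsetPn; exists v; first by rewrite inE.
rewrite in_setI in_setC cnbhd_sym Hw //.
Qed.

Section Lower.
Variable A : {set T}.
Hypothesis Hc : forall a b, a \in A -> b \in ~: A -> e a b.
Hypothesis Hi : forall b b', b \in ~: A -> b' \in ~: A -> ~~ e b b'.

Lemma L f (D : {set T}) : D \subset ~: A -> #|~: A :\: D| <= f -> #|~: A :\: D| <= igame e f D.
Proof.
elim: f D => [|f IH] D HD Hf; first by move: Hf; rewrite leqn0 => /eqP->.
case Hk: #|~: A :\: D| => [//|k] /=.
have [b Hb] : exists b, b \in ~: A :\: D by apply/set0Pn; rewrite -card_gt0 Hk.
have bnd : b \notin dominated e D.
  rewrite /dominated inE; apply/existsPn => d; apply/negP => /andP[dD].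
  rewrite inE => /orP[/eqP bd|db]; first by move: Hb; rewrite bd in_setD dD.
  move: Hb; rewrite in_setD => /andP[_ Hb].
  by move: (Hi (subsetP HD _ dD) Hb); rewrite db.
rewrite ifF; last first.
  by apply/negP => /eqP Hd; move: bnd; rewrite Hd inE.
apply: bigmin_ge => [|v Hv]; first by rewrite -Hk max_card.
have [u [Hu Hu']] : exists u, u \in cnbhd e v /\ u \in ~: A :\: D.
  case vA: (v \in A).
    exists b; split=> //; rewrite inE Hc //; first by rewrite orbT.
    by move: Hb; rewrite in_setD => /andP[].
  exists v; split; first exact: cnbhd_self.
  rewrite !inE vA andbT; apply/negP => vD; move: Hv; rewrite /dominated inE.
  by move/existsPn => /(_ v); rewrite vD cnbhd_self.
apply: leq_trans (leq_bigmax_cond _ Hu); rewrite ltnS.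
have E : ~: A :\: (u |: D) = (~: A :\: D) :\ u.
  by apply/setP=> y; rewrite !inE; case: (y == u); case: (y \in D); case: (y \in A).
have Ek : #|~: A :\: (u |: D)| = k.
  by move: Hk; rewrite (cardsD1 u) Hu' E => [[]].
rewrite -Ek; apply: IH; last by rewrite Ek; lia.
rewrite subUset sub1set HD andbT; by move: Hu'; rewrite in_setD => /andP[].
Qed.

End Lower.
End G.

Lemma le1_eq (T : finType) (S : {set T}) a b :
  #|S| <= 1 -> a \in S -> b \in S -> a = b.
Proof. by move/card_le1_eqP => H aS bS; apply: H. Qed.

Ltac nlia T := repeat match goal with H : ?P |- _ => match type of P with Prop => revert H end end;
  move: #|T| => ?; intros; lia.

Theorem theorem4p1 (T : finType) (e : rel T) (delta : nat) :
  simple_graph e ->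
  is_min_degree e delta ->
  2 * delta + 2 <= #|T| ->
  (gamma_i e = #|T| - delta <-> has_spanning_Kdn_indep e delta).
Proof.
move=> [esym eirr] [mindeg [v0 _]] Hn.
have [f Hf] : exists f, #|T| = f.+1 by exists (#|T| - 1); nlia T.
have E : gamma_i e = igame e f.+1 set0 by rewrite /gamma_i Hf.
have nd0 : dominating e set0 = false.
  rewrite /dominating dom0; apply/negP => /eqP H.
  by have := in_setT v0; rewrite -H inE.
have v0u : v0 \notin dominated e set0 by rewrite dom0 inE.
have cardN : forall u, #|~: cnbhd e u| = #|T| - (deg e u).+1.
  by move=> u; rewrite -(cardsC (cnbhd e u)) card_cnbhd //; nlia T.
have cnb_le : forall u, (deg e u).+1 <= #|T|.
  by move=> u; rewrite -card_cnbhd //; exact: max_card.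
have Hup : gamma_i e <= #|T| - delta.
  rewrite E /= nd0.
  apply: leq_trans (bigmin_le (P := fun v => v \notin dominated e set0) _ _ v0u) _.
  apply/bigmax_leqP => u _.
  have := U1 esym f (u |: set0); rewrite domU // dom0 (setU0 (cnbhd e u)) cardN.
  have := mindeg u; have := cnb_le u; nlia T.
split; last first.
  case=> A [cA cCA Hc Hi]; apply/anti_leq; rewrite Hup /= -cCA.
  have := L Hc Hi (f := #|T|) (D := set0); rewrite setD0 /gamma_i; apply => //.
  exact: sub0set. exact: max_card.
move=> Hg.
have H1 : #|T| - delta <= igame e f.+1 set0 by rewrite -E Hg.
move: H1; rewrite /= nd0 => H1.
have {}H1 := leq_trans H1 (bigmin_le (P := fun v => v \notin dominated e set0) _ _ v0u).
have c0 : 0 < #|cnbhd e v0| by rewrite card_cnbhd.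
have [u Hu Hmax] := eq_bigmax_cond (fun u => (igame e f (u |: set0)).+1) c0.
rewrite Hmax in H1.
have Hu1 := U1 esym f (u |: set0); rewrite domU // dom0 (setU0 (cnbhd e u)) cardN in Hu1.
have degu : deg e u = delta.
  have := mindeg u; have := cnb_le u; nlia T.
set Au := [set x | e u x].
set R := ~: cnbhd e u.
have cR : #|R| = #|T| - delta - 1 by rewrite /R cardN degu; nlia T.
have cAu : #|Au| = delta by [].
have Nfull : forall z, z \in R -> (forall x, x \in R -> ~~ e z x) -> [set x | e z x] = Au.
  move=> z zR Hz; apply/eqP; rewrite eqEcard; apply/andP; split; last first.
    by rewrite cAu; exact: mindeg.
  apply/subsetP => x; rewrite inE => zx; rewrite inE.
  have : x \notin R by apply/negP => xR; move: (Hz x xR); rewrite zx.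
  rewrite /R in_setC negbK inE => /orP[/eqP xu|//].
  by move: zR; rewrite /R in_setC inE -xu esym zx orbT.
have indepR : forall r1 r2, r1 \in R -> r2 \in R -> ~~ e r1 r2.
  move=> r1 r2 r1R r2R; apply/negP => E12.
  case: (boolP [exists w in R, [forall y in cnbhd e w, 1 < #|R :&: cnbhd e y|]]).
  - case/exists_inP => w wR /forall_inP Hw.
    have [f' Hf'] : exists f', f = f'.+1 by exists (f - 1); nlia T.
    suff : igame e f (u |: set0) <= #|T| - delta - 2 by nlia T.
    rewrite Hf' /=; case: ifP => // _.
    have wu : w \notin dominated e (u |: set0) by rewrite domU // dom0 setU0 -in_setC.
    apply: leq_trans (bigmin_le (P := fun v => v \notin dominated e (u |: set0)) _ _ wu) _.
    apply/bigmax_leqP => y Hy.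
    have := U1 esym f' (y |: (u |: set0)); rewrite domU // domU // dom0 (setU0 (cnbhd e u)) setCU -/R.
    have -> : ~: cnbhd e y :&: R = R :\: cnbhd e y by rewrite setDE setIC.
    have := cardsID (cnbhd e y) R.
    have := Hw y Hy; nlia T.
  - move/exists_inPn => Hpriv.
    have Hp : forall w, w \in R -> exists2 y, y \in cnbhd e w & #|R :&: cnbhd e y| <= 1.
      move=> w wR; have /forall_inPn [y Hy Hy'] := Hpriv w wR.
      by exists y => //; rewrite leqNgt.
    pose g w := odflt w [pick y in cnbhd e w | #|R :&: cnbhd e y| <= 1].
    have gspec : forall w, w \in R -> g w \in cnbhd e w /\ #|R :&: cnbhd e (g w)| <= 1.
      move=> w wR; rewrite /g; case: pickP => [y /andP[]|none] //=.
      by have [y Hy Hy'] := Hp w wR; move: (none y); rewrite Hy Hy'.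
    set W := [set w in R | [exists r in R, e w r]].
    have gA : forall w, w \in W -> g w \in Au.
      move=> w; rewrite inE => /andP[wR /exists_inP [r rR wr]].
      have [gw gc] := gspec w wR.
      have wI : w \in R :&: cnbhd e (g w) by rewrite inE wR cnbhd_sym.
      have gw_w : g w != w.
        apply/negP => /eqP gwE.
        have rI : r \in R :&: cnbhd e (g w) by rewrite inE rR gwE inE wr orbT.
        by move: wr; rewrite (le1_eq gc rI wI) eirr.
      have gR : g w \notin R.
        apply/negP => gR.
        have gI : g w \in R :&: cnbhd e (g w) by rewrite inE gR cnbhd_self.
        by move: gw_w; rewrite (le1_eq gc gI wI) eqxx.
      move: gR; rewrite /R in_setC negbK inE => /orP[/eqP gu|]; last by rewrite inE.
      move: gw; rewrite gu inE => /orP[/eqP uw|wu].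
        by move: wR; rewrite /R in_setC -uw cnbhd_self.
      by move: wR; rewrite /R in_setC inE esym wu orbT.
    have ginj : {in W &, injective g}.
      move=> w1 w2 /setIdP[w1R _] /setIdP[w2R _] gE.
      have [g1 c1] := gspec w1 w1R; have [g2 c2] := gspec w2 w2R.
      have i1 : w1 \in R :&: cnbhd e (g w1) by rewrite inE w1R cnbhd_sym.
      have i2 : w2 \in R :&: cnbhd e (g w1) by rewrite inE w2R gE cnbhd_sym.
      exact: le1_eq c1 i1 i2.
    have cW : #|W| <= delta.
      rewrite -(card_in_imset ginj) -cAu; apply: subset_leq_card.
      by apply/subsetP => _ /imsetP [w wW ->]; exact: gA.
    have [z] : exists z, z \in R :\: W.
      apply/set0Pn; rewrite -card_gt0.
      have := cardsID W R; have := subset_leq_card (subsetIr R W); nlia T.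
    rewrite in_setD => /andP[zW zR].
    have zN : forall x, x \in R -> ~~ e z x.
      move=> x xR; apply/negP => zx; move: zW; rewrite inE zR /=.
      by move/exists_inP; apply; exists x.
    have r1W : r1 \in W by apply/setIdP; split => //; apply/exists_inP; exists r2.
    have [g1 c1] := gspec r1 r1R.
    have ez : e z (g r1).
      by have := gA r1 r1W; rewrite -(Nfull z zR zN) inE.
    have i1 : r1 \in R :&: cnbhd e (g r1) by rewrite inE r1R cnbhd_sym.
    have iz : z \in R :&: cnbhd e (g r1) by rewrite inE zR inE esym ez orbT.
    by move: zW; rewrite (le1_eq c1 iz i1) r1W.
exists Au; split => //.
- by have := cardsC Au; nlia T.
- move=> a b; rewrite inE => ua; rewrite in_setC inE => ub.
  case: (eqVneq b u) => [->|bu]; first by rewrite esym.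
  have bR : b \in R by rewrite /R in_setC inE negb_or bu ub.
  have := Nfull b bR (fun x xR => indepR b x bR xR); move/setP => /(_ a); rewrite !inE ua esym => ->.
  done.
- move=> b b'; rewrite !in_setC !inE => ub ub'.
  case: (eqVneq b u) => [->|bu]; first by [].
  case: (eqVneq b' u) => [->|b'u]; first by rewrite esym.
  by apply: indepR; rewrite /R in_setC inE negb_or ?bu ?b'u.
Qed.
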